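(* Let $q$ be a prime power and let $n_1,n_2$ be coprime odd positive integers, each coprime to $q$. If $x-1$ is the only SCRIM factor of $x^{n_1}-1$ and the only SCRIM factor of $x^{n_2}-1$ in $\mathbb{F}_{q^2}[x]$, then $x-1$ is the only SCRIM factor of $x^{n_1n_2}-1$ in $\mathbb{F}_{q^2}[x]$.
   Context: $\mathbb{F}_{q^2}$ is the finite field with $q^2$ elements. For $\alpha\in\mathbb{F}_{q^2}$ put $\bar\alpha=\alpha^q$, and for $f(x)=\sum_i f_ix^i$ put $\overline{f(x)}=\sum_i \bar f_i x^i$. For $f(x)$ with $f(0)\neq 0$, $f^*(x)=x^{\deg f}f(0)^{-1}f(1/x)$ and $f^\dagger(x)=\overline{f^*(x)}$. A polynomial is SCRIM if it is monic, irreducible over $\mathbb{F}_{q^2}$, has nonzero constant term, and satisfies $f=f^\dagger$. A SCRIM factor of $x^n-1$ is a SCRIM polynomial dividing $x^n-1$ in $\mathbb{F}_{q^2}[x]$. *)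

(* Defs.v *)
From HB Require Import structures.
From mathcomp Require Import all_boot all_order all_algebra all_field.
Set Implicit Arguments. Unset Strict Implicit. Unset Printing Implicit Defensive.
Import GRing.Theory.
Local Open Scope ring_scope.

Section Scrim.
Variables (F : finFieldType) (q : nat).

Definition conj_poly (f : {poly F}) : {poly F} := map_poly (fun a => a ^+ q) f.

(* f^*(x) = x^{deg f} f(0)^{-1} f(1/x): reversed coefficient sequence, scaled *)
Definition recip_poly (f : {poly F}) : {poly F} :=
  (f`_0)^-1 *: Poly (rev (polyseq f)).

Definition dagger_poly (f : {poly F}) : {poly F} := conj_poly (recip_poly f).

Definition SCRIM (f : {poly F}) : Prop :=
  [/\ f \is monic, irreducible_poly f, f`_0 != 0 & f = dagger_poly f].

Definition SCRIM_factor (n : nat) (f : {poly F}) : Prop :=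
  SCRIM f /\ f %| 'X^n - 1.

Definition only_trivial_SCRIM_factor (n : nat) : Prop :=
  SCRIM_factor n ('X - 1) /\ forall f, SCRIM_factor n f -> f = 'X - 1.

End Scrim.

(* Main.v *)
From HB Require Import structures.
From mathcomp Require Import all_boot all_order all_algebra all_field.
From Stdlib Require Import Classical.
Set Implicit Arguments. Unset Strict Implicit. Unset Printing Implicit Defensive.
Import GRing.Theory Pdiv.Field.
Local Open Scope ring_scope.
Require Import Defs.

Section Gen.
Variables (F : finFieldType) (L : fieldType) (iota : {rmorphism F -> L}).

Lemma minsize_ex (z : L) n (p : {poly F}) : (size p <= n)%N -> p != 0 ->
  root (map_poly iota p) z ->
  exists g : {poly F}, [/\ g != 0, root (map_poly iota g) z &
    forall r, root (map_poly iota r) z -> r != 0 -> (size g <= size r)%N].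
Proof.
elim: n p => [|n IH] p sp pn0 rp.
  by move: pn0; rewrite -size_poly_eq0; move: sp; rewrite leqn0 => ->.
destruct (classic (forall r, root (map_poly iota r) z -> r != 0 -> (size p <= size r)%N)) as [H|H].
  by exists p.
apply: NNPP => H2; apply: H => r rr rn0; rewrite leqNgt; apply/negP => lt.
apply: H2; apply: (IH r) => //; rewrite -ltnS; exact: leq_trans lt sp.
Qed.

Lemma minpoly_ex (z : L) (p0 : {poly F}) : p0 != 0 -> root (map_poly iota p0) z ->
  exists g : {poly F}, [/\ g \is monic, irreducible_poly g, root (map_poly iota g) z &
    forall r, root (map_poly iota r) z -> g %| r].
Proof.
move=> p0n0 rp0.
have [g [gn0 rg gmin]] := minsize_ex (leqnn _) p0n0 rp0.
have lg : lead_coef g != 0 by rewrite lead_coef_eq0.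
set g' := (lead_coef g)^-1 *: g.
have g'n0 : g' != 0 by rewrite scaler_eq0 negb_or invr_eq0 lg.
have sg' : size g' = size g by rewrite size_scale // invr_eq0.
have rg' : root (map_poly iota g') z.
  by rewrite /root map_polyZ hornerZ (eqP rg) mulr0.
have g'min : forall r, root (map_poly iota r) z -> r != 0 -> (size g' <= size r)%N.
  by move=> r rr rn0; rewrite sg'; apply: gmin.
exists g'; split => //.
- by rewrite monicE /g' lead_coefZ mulVf.
- by apply/(subfx_irreducibleP rg' g'n0).
move=> r rr; apply/modp_eq0P; apply: contraTeq isT => rn0.
have : root (map_poly iota (r %% g')) z.
  move: rr; rewrite {1}(divp_eq r g') /root rmorphD rmorphM /= hornerD hornerM.
  by rewrite (eqP rg') mulr0 add0r.
move/g'min => /(_ rn0); rewrite leqNgt ltn_modp g'n0 //.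
Qed.

Lemma rev_root (p : {poly F}) (z : L) : z != 0 -> root (map_poly iota p) z ->
  root (map_poly iota (Poly (rev p))) z^-1.
Proof.
move=> zn0 rp.
have [-> | pn0] := eqVneq p 0; first by rewrite polyseq0 /= map_poly0 root0.
have nz_u_n := expf_neq0 (size p).-1 zn0.
apply/eqP/(mulIf nz_u_n); rewrite mul0r -(eqP rp).
rewrite (@horner_coef_wide _ (size p)); last first.
  by rewrite size_map_poly -(size_rev p) size_Poly.
rewrite horner_coef mulr_suml size_map_poly.
rewrite [rhs in _ = rhs](reindex_inj rev_ord_inj) /=.
apply: eq_bigr => i _; rewrite !coef_map coef_Poly nth_rev // -mulrA.
congr (_ * _); rewrite -{2}(subnKC (valP i)) addSn addnC exprD exprVn mulrC.
by rewrite mulfK // expf_neq0.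
Qed.

Lemma frob_horner (h : {poly F}) (z : L) (m : nat) :
  (0 < m)%N -> [pchar L].-nat m ->
  (map_poly iota h).[z] ^+ m = (map_poly iota (map_poly (fun a => a ^+ m) h)).[z ^+ m].
Proof.
move=> m0 pm.
have [-> | hn0] := eqVneq h 0.
  by rewrite !map_poly0 !horner0 expr0n eqn0Ngt m0.
have sz : size (map_poly (fun a => a ^+ m) h) = size h.
  by apply: size_map_poly_id0; rewrite expf_eq0 m0 lead_coef_eq0 hn0.
rewrite horner_coef (@horner_coef_wide _ (size h)); last by rewrite size_map_poly sz.
rewrite size_map_poly.
rewrite (big_morph (fun x => x ^+ m) (fun x y => exprDn_pchar x y pm) (expr0n _ m)).
rewrite eqn0Ngt m0 /=.
apply: eq_bigr => i _; rewrite !coef_map /= coef_map_id0 ?expr0n ?eqn0Ngt ?m0 //.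
by rewrite exprMn rmorphXn exprAC.
Qed.

End Gen.
Section Scr.
Variables (F : finFieldType) (q p k : nat).
Hypotheses (pp : prime p) (k0 : (0 < k)%N) (qE : q = (p ^ k)%N) (hF : #|F| = (q ^ 2)%N).

Lemma pF : p \in [pchar F].
Proof. by apply: (@card_finPcharP _ p (k * 2)) => //; rewrite hF qE expnM. Qed.

Lemma q0 : (0 < q)%N.
Proof. by rewrite qE expn_gt0 prime_gt0. Qed.

Lemma pnatL (L : fieldType) (iota : {rmorphism F -> L}) e : [pchar L].-nat (p ^ e)%N.
Proof.
have pL : p \in [pchar L] := rmorph_pchar iota pF.
by rewrite (eq_pnat _ (pcharf_eq pL)) pnatX pnat_id.
Qed.

Lemma dagger_monic (g : {poly F}) : g \is monic -> g`_0 != 0 ->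
  dagger_poly q g \is monic /\ size (dagger_poly q g) = size g.
Proof.
move=> gm g0.
have gn0 : g != 0 by apply: monic_neq0.
have lr : last 0 (rev g) = g`_0.
  by case E: (polyseq g) => [|c s]; [move: gn0; rewrite -size_poly_eq0 E | rewrite rev_cons last_rcons].
have PK : Poly (rev g) = rev g :> seq F by apply: (@PolyK _ 0); rewrite lr.
have sP : size (Poly (rev g)) = size g by rewrite PK size_rev.
have lP : lead_coef (Poly (rev g)) = g`_0.
  by rewrite /lead_coef PK nth_last lr.
have rm : recip_poly g \is monic by rewrite monicE /recip_poly lead_coefZ lP mulVf.
have sr : size (recip_poly g) = size g by rewrite /recip_poly size_scale ?sP // invr_eq0.
have l1 : (lead_coef (recip_poly g)) ^+ q != 0 by rewrite (eqP rm) expr1n oner_eq0.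
split.
  rewrite /dagger_poly /conj_poly monicE lead_coef_map_id0 ?(eqP rm) ?expr1n //.
  by rewrite expr0n eqn0Ngt q0.
  by rewrite oner_eq0.
by rewrite /dagger_poly /conj_poly size_map_poly_id0.
Qed.

Lemma dagger_root (L : fieldType) (iota : {rmorphism F -> L}) (h : {poly F}) (z : L) :
  z != 0 -> root (map_poly iota h) z ->
  root (map_poly iota (dagger_poly q h)) ((z^-1) ^+ q).
Proof.
move=> zn0 rh.
have r1 : root (map_poly iota (recip_poly h)) z^-1.
  by rewrite /root /recip_poly map_polyZ hornerZ (eqP (rev_root zn0 rh)) mulr0.
rewrite /root /dagger_poly /conj_poly -(@frob_horner _ _ iota _ _ _ q0); last by rewrite qE pnatL.
by rewrite (eqP r1) expr0n eqn0Ngt q0.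
Qed.

Lemma key (L : fieldType) (iota : {rmorphism F -> L}) (f : {poly F}) (a : L) n m :
  SCRIM q f -> root (map_poly iota f) a -> (0 < n)%N ->
  only_trivial_SCRIM_factor F q n -> a ^+ (n * m) = 1 -> a ^+ m = 1.
Proof.
move=> [fmon firr f0 fdag] rfa n0 [_ htriv] aN.
case: m aN => [|m] aN; first by rewrite expr0.
have nm0 : (n * m.+1 != 0)%N by rewrite muln_eq0 negb_or -!lt0n n0.
have an0 : a != 0.
  by apply/eqP => a0; move: aN; rewrite a0 expr0n (negbTE nm0) => /eqP; rewrite eq_sym oner_eq0.
set b := a ^+ m.+1.
have bn : b ^+ n = 1 by rewrite /b -exprM mulnC.
have bn0 : b != 0 by rewrite expf_neq0.
have Xn0 : ('X^n - 1 : {poly F}) != 0 by apply: monic_neq0; apply: monicXnsubC.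
have rXn : root (map_poly iota ('X^n - 1)) b.
  by rewrite /root rmorphB rmorph1 /= map_polyXn !hornerE bn subrr.
have [g [gm girr rg gmin]] := minpoly_ex Xn0 rXn.
have Xm0 : ('X^(n * m.+1) - 1 : {poly F}) != 0.
  by apply: monic_neq0; apply: monicXnsubC; rewrite lt0n.
have rXa : root (map_poly iota ('X^(n * m.+1) - 1)) a.
  by rewrite /root rmorphB rmorph1 /= map_polyXn !hornerE aN subrr.
have [ga [gam gairr rga gamin]] := minpoly_ex Xm0 rXa.
have gaf : ga %= f.
  apply: (snd firr); last exact: gamin.
  by rewrite neq_ltn (fst gairr) orbT.
have fdivr : forall r, root (map_poly iota r) a -> f %| r.
  by move=> r rr; rewrite -(eqp_dvdl _ gaf); apply: gamin.
set a' := (a^-1)^+q.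
have ra' : root (map_poly iota f) a' by rewrite {1}fdag; apply: dagger_root.
have rcomp : root (map_poly iota (g \Po 'X^(m.+1))) a.
  by rewrite /root map_comp_poly map_polyXn horner_comp hornerXn.
have rg' : root (map_poly iota g) ((b^-1)^+q).
  have /dvdpP [u ue] := fdivr _ rcomp.
  have : root (map_poly iota (g \Po 'X^(m.+1))) a'.
    by rewrite ue /root rmorphM hornerM (eqP ra') mulr0.
  rewrite /root map_comp_poly map_polyXn horner_comp hornerXn.
  suff -> : a' ^+ m.+1 = (b^-1)^+q by [].
  by rewrite /a' /b !exprVn -!exprM mulnC.
have bq0 : (b^-1)^+q != 0 by rewrite expf_neq0 // invr_eq0.
have rdg : root (map_poly iota (dagger_poly q g)) (b ^+ (q*q)).
  have := dagger_root bq0 rg'.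
  by rewrite exprVn -exprM exprVn invrK.
have q20 : (0 < q^2)%N by rewrite expn_gt0 q0.
have rdg2 : root (map_poly iota (dagger_poly q g)) b.
  have idm : map_poly (fun x => x ^+ (q^2)%N) (dagger_poly q g) = dagger_poly q g.
    by apply/polyP => i; rewrite coef_map_id0 ?expr0n ?eqn0Ngt ?q20 // -hF expf_card.
  have := @frob_horner _ _ iota (dagger_poly q g) b _ q20.
  have pq : [pchar L].-nat (q * q)%N by rewrite qE -expnD pnatL.
  rewrite idm -mulnn (eqP rdg) => /(_ pq) /eqP.
  by rewrite expf_eq0 => /andP [].
have gdg : g %| dagger_poly q g := gmin _ rdg2.
have g0 : g`_0 != 0.
  apply/negP => /eqP g0.
  have : root g 0 by rewrite /root horner_coef0 g0.
  move/(root_dvdp (gmin _ rXn)).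
  by rewrite /root !hornerE expr0n eqn0Ngt n0 sub0r oppr_eq0 oner_eq0.
have [dm ds] := dagger_monic gm g0.
have gd : g = dagger_poly q g.
  by apply/eqP; rewrite -eqp_monic // -dvdp_size_eqp // ds.
have : SCRIM_factor q n g by split; [split | exact: gmin].
move/htriv => ge.
move: rg; rewrite ge /root rmorphB /= map_polyX rmorph1 !hornerE subr_eq0.
by move/eqP.
Qed.
End Scr.

Unset Implicit Arguments.
Close Scope ring_scope.

Theorem theorem2p9 (F : finFieldType) (q : nat)
  (hq : exists p k : nat, [/\ prime p, (0 < k)%N & q = (p ^ k)%N])
  (hF : #|F| = (q ^ 2)%N)
  (n1 n2 : nat)
  (hn1 : (0 < n1)%N) (hn2 : (0 < n2)%N)
  (hodd1 : odd n1) (hodd2 : odd n2)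
  (hcop : coprime n1 n2) (hq1 : coprime n1 q) (hq2 : coprime n2 q)
  (h1 : only_trivial_SCRIM_factor F q n1)
  (h2 : only_trivial_SCRIM_factor F q n2) :
  only_trivial_SCRIM_factor F q (n1 * n2).
Proof.
Local Open Scope ring_scope.
case: hq => p [k [pp k0 qE]].
split.
  split; first exact: h1.1.1.
  by rewrite -polyC1 dvdp_XsubCl /root !hornerE expr1n subrr.
move=> f [fS fdvd].
have fS' := fS; case: fS' => [fmon firr f0 fdag].
have mi : monic_irreducible_poly f := (firr, fmon).
pose K := {poly %/ f with mi}.
pose iota : {rmorphism F -> K} := qpolyC f.
pose a : K := 'qX.
have evq : forall r, (map_poly iota r).[a] = in_qpoly f r.
  by move=> r; rewrite -in_qpoly_comp_horner comp_polyXr.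
have inf : in_qpoly f f = 0.
  by apply: val_inj => /=; rewrite mk_monicE // Pdiv.RingMonic.rmodpp.
have rfa : root (map_poly iota f) a by rewrite /root evq inf.
have aN : a ^+ (n1 * n2) = 1.
  have /dvdpP [u ue] := fdvd.
  have : (map_poly iota ('X^(n1 * n2) - 1)).[a] = 0 by rewrite evq ue in_qpolyM inf mulr0.
  rewrite rmorphB rmorph1 /= map_polyXn !hornerE => /eqP; rewrite subr_eq0 => /eqP //.
have a2 : a ^+ n2 = 1 := key pp qE hF fS rfa hn1 h1 aN.
have a1 : a ^+ n1 = 1.
  by apply: (key pp qE hF fS rfa hn2 h2); rewrite mulnC.
have a1' : a = 1.
  have [u _ hu] := Bezoutl n2 hn1.
  move: hu; rewrite (eqP hcop) => /dvdnP [c hc].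
  have : a ^+ (1 + u * n2) = 1 by rewrite hc mulnC exprM a1 expr1n.
  by rewrite exprD expr1 mulnC exprM a2 expr1n mulr1.
have : root (map_poly iota f) 1 by rewrite -a1'.
rewrite -(rmorph1 iota) /root horner_map fmorph_eq0 => r1.
have d : 'X - 1 %| f by rewrite -polyC1 dvdp_XsubCl.
have e := (snd firr) ('X - 1) _ d.
apply/eqP; rewrite -eqp_monic //; last by rewrite -polyC1 monicXsubC.
by rewrite eqp_sym e // -polyC1 size_XsubC.
Qed.
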